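(* Let $T,\nu,M_t$ be integers with $\nu\ge 0$, $M_t\ge1$ and $T\ge M_t(\nu+1)$. Let $\alpha$ be a primitive element of $\mathbb{F}_{2^T}$, $\xi=\alpha^{\nu+1}$, and $(\theta_0,\dots,\theta_{T-1})$ the trace dual basis of $(\alpha^0,\dots,\alpha^{T-1})$. For $f_0\in\mathbb{F}_{2^T}$ let $f(x)=f_0x$ and let $\mathcal{S}=\{f_0\in\mathbb{F}_{2^T}:\ \mathrm{Tr}(\theta_if(\xi^j))=0\ \forall i\in\{T-\nu,\dots,T-1\},\ \forall j\in\{1,\dots,M_t\}\}$. Then $\frac{1}{T}\log_2|\mathcal{S}|\ge 1-\frac{\nu M_t}{T}$, and for every $f\in\mathcal{S}$ with $f_0\neq0$, $\operatorname{rank}_{\mathbb{F}_2}(\mathbf{U}_f)\ge M_t(\nu+1)$.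
   Context: $\mathrm{Tr}$ is the trace from $\mathbb{F}_{2^T}$ to $\mathbb{F}_2$; the trace dual basis satisfies $\mathrm{Tr}(\theta_i\alpha^j)=\delta_{ij}$. For $f$ let $\mathbf{c}_f=(f(1),f(\xi),\dots,f(\xi^{M_t-1}))^t\in\mathbb{F}_{2^T}^{M_t}$ and $\mathbf{u}_f=(\mathbf{c}_f^t,\alpha\mathbf{c}_f^t,\dots,\alpha^\nu\mathbf{c}_f^t)^t\in\mathbb{F}_{2^T}^{(\nu+1)M_t}$. $\mathbf{U}_f\in\mathbb{F}_2^{(\nu+1)M_t\times T}$ is the binary matrix whose $r$-th row is the coordinate vector of the $r$-th entry of $\mathbf{u}_f$ with respect to the basis $(\alpha^0,\alpha^1,\dots,\alpha^{T-1})$ of $\mathbb{F}_{2^T}$ over $\mathbb{F}_2$. *)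

(* Defs.v *)
From HB Require Import structures.
From mathcomp Require Import all_boot all_order all_algebra all_field.
From mathcomp Require Import all_classical all_reals all_analysis.
Set Implicit Arguments. Unset Strict Implicit. Unset Printing Implicit Defensive.
Import Order.TTheory GRing.Theory Num.Theory.
Local Open Scope ring_scope.

Definition trace2 (F : fieldType) (T : nat) (x : F) : F :=
  \sum_(k < T) x ^+ (2 ^ k).

(* The r-th entry of u_f = (c_f^t, alpha c_f^t, ..., alpha^nu c_f^t)^t, where
   c_f = (f(1), f(xi), ..., f(xi^(Mt-1))) and f(x) = f0 x.
   Row r = l * Mt + k (k < Mt, l <= nu) holds alpha^l * f(xi^k). *)
Definition uf_entry (F : fieldType) (Mt : nat) (alpha xi f0 : F) (r : nat) : F :=
  alpha ^+ (r %/ Mt) * (f0 * xi ^+ (r %% Mt)).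

Definition F2_to (F : fieldType) (b : 'F_2) : F := (nat_of_ord b)%:R.

Definition is_Uf (F : fieldType) (T nu Mt : nat) (alpha xi f0 : F)
  (U : 'M['F_2]_(nu.+1 * Mt, T)) : Prop :=
  forall r : 'I_(nu.+1 * Mt),
    uf_entry Mt alpha xi f0 r = \sum_(j < T) F2_to F (U r j) * alpha ^+ j.

Definition Sset (F : finFieldType) (T nu Mt : nat) (theta : 'I_T -> F) (xi : F)
  : {set F} :=
  [set f0 : F | [forall i : 'I_T, (T - nu <= i)%N ==>
       [forall j : 'I_Mt.+1, (0 < j)%N ==>
          (trace2 T (theta i * (f0 * xi ^+ j)) == 0)]]].

(* Main.v *)
Require Import Defs.
From HB Require Import structures.
From mathcomp Require Import all_boot all_order all_algebra all_field.
From mathcomp Require Import all_classical all_reals all_analysis.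
From mathcomp Require Import zify ring.
Import Order.TTheory GRing.Theory Num.Theory.
Local Open Scope ring_scope.


Section Tr.
Variables (F : finFieldType) (T : nat) (hcard : #|F| = (2 ^ T)%N).

Lemma char2 : 2%N \in [char F].
Proof. exact: card_finPcharP hcard _. Qed.

Lemma two0 : 1 + 1 = 0 :> F.
Proof. by have /andP[_ /eqP] := char2. Qed.

Lemma frobD (k : nat) (x y : F) : (x + y) ^+ (2 ^ k) = x ^+ (2 ^ k) + y ^+ (2 ^ k).
Proof.
apply: exprDn_pchar. by rewrite pnatX (pnatE _ (isT : prime 2)) char2.
Qed.

Lemma trD (x y : F) : trace2 T (x + y) = trace2 T x + trace2 T y.
Proof. by rewrite /trace2 -big_split /=; apply: eq_bigr => k _; rewrite frobD. Qed.

Lemma tr01 (x : F) : trace2 T x = 0 \/ trace2 T x = 1.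
Proof.
have sq : trace2 T x ^+ 2 = trace2 T x.
  have e0 : (0:F) ^+ 2 = 0 by rewrite expr2 mul0r.
  have fD : {morph (fun z : F => z ^+ 2) : a b / a + b}.
    by move=> a b; exact: (frobD 1).
  rewrite /trace2 (big_morph _ fD e0) /=.
  case: T hcard => [|T'] hc; first by rewrite !big_ord0.
  rewrite big_ord_recr big_ord_recl /= expn0 expr1.
  rewrite -exprM -expnSr -hc expf_card addrC; congr (_ + _).
  by apply: eq_bigr => i _; rewrite -exprM -expnSr.
have : trace2 T x * (trace2 T x - 1) == 0 by rewrite mulrBr mulr1 -expr2 sq subrr.
by rewrite mulf_eq0 subr_eq0 => /orP[] /eqP; [left|right].
Qed.
End Tr.

Section Count.
Variables (F : finFieldType) (I : finType) (g : I -> F -> F).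
Hypotheses (t0 : 1 + 1 = 0 :> F) (gD : forall i x y, g i (x + y) = g i x + g i y)
  (g01 : forall i x, g i x = 0 \/ g i x = 1).

Definition kerS (P : {set I}) := [set x : F | [forall i in P, g i x == 0]].

Lemma count_ker n (P : {set I}) : #|P| = n -> (#|F| <= 2 ^ n * #|kerS P|)%N.
Proof.
elim: n P => [|n IH] P hP.
  have -> : kerS P = [set: F].
    apply/setP=> x; rewrite !inE; apply/forall_inP => i iP.
    by move: hP; move/card0_eq => /(_ i); rewrite iP.
  by rewrite cardsT mul1n.
have [i0 i0P] : exists i0, i0 \in P by apply/card_gt0P; rewrite hP.
have hP' : #|P :\ i0| = n by move: hP; rewrite (cardsD1 i0) i0P add1n => -[].
have := IH _ hP'.
set K' := kerS (P :\ i0); set B := [set x : F | g i0 x == 0].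
have eK : kerS P = K' :&: B.
  apply/setP=> x; rewrite !inE; apply/forall_inP/andP.
    move=> H; split; last exact: H.
    by apply/forall_inP => i; rewrite !inE => /andP[_]; apply: H.
  case=> /forall_inP H1 H2 i iP; case: (eqVneq i i0) => [->//|ne].
  by apply: H1; rewrite !inE ne.
have le : (#|K' :\: B| <= #|kerS P|)%N.
  case: (set_0Vmem (K' :\: B)) => [->|[x0 x0K]]; first by rewrite cards0.
  rewrite -(card_imset (K' :\: B) (addIr x0)); apply: subset_leq_card.
  apply/fintype.subsetP => _ /imsetP[y yK ->].
  move: yK x0K; rewrite eK !inE => /andP[yB yK] /andP[x0B x0K].
  have g1 z : g i0 z != 0 -> g i0 z = 1.
    by case: (g01 i0 z) => -> //; rewrite eqxx.
  rewrite gD (g1 _ yB) (g1 _ x0B) t0 eqxx andbT.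
  apply/forall_inP => i iP; rewrite gD; move: yK x0K => /forall_inP /(_ _ iP) /eqP ->.
  by move=> /forall_inP /(_ _ iP) /eqP ->; rewrite addr0.
rewrite -(cardsID B K') -eK => h; apply: (leq_trans h).
by rewrite expnS; move: le; nia.
Qed.
End Count.

Lemma cardA (T nu : nat) : (nu <= T)%N -> #|[set i : 'I_T | (T - nu <= i)%N]| = nu.
Proof.
move=> hnu; rewrite -sum1_card big_mkcond /=.
rewrite (eq_bigr (fun i : 'I_T => if (T - nu <= i)%N then 1%N else 0%N)); last by move=> i _; rewrite inE.
rewrite -(big_mkord xpredT (fun i => if (T - nu <= i)%N then 1%N else 0%N)).
rewrite (big_cat_nat (leq0n (T - nu)) (leq_subr nu T)) /=.
rewrite big_nat_cond big1 ?add0n; last first.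
  by move=> i /andP[/andP[_ hi] _]; rewrite leqNgt hi.
rewrite big_nat_cond (eq_bigr (fun _ => 1%N)); last by move=> i /andP[/andP[-> _] _].
by rewrite -big_nat_cond sum_nat_const_nat muln1 subKn.
Qed.

Lemma cardB (Mt : nat) : #|[set j : 'I_Mt.+1 | (0 < j)%N]| = Mt.
Proof.
have -> : [set j : 'I_Mt.+1 | (0 < j)%N] = ~: [set ord0].
  by apply/setP => j; rewrite !inE lt0n.
by apply/eqP; rewrite -(eqn_add2l 1) -(cards1 (@ord0 Mt)) cardsC card_ord cards1 add1n.
Qed.

Section F2.
Variable (F : fieldType).
Hypothesis t0 : 1 + 1 = 0 :> F.

Lemma F2_01 (b : 'F_2) : b = 0 \/ b = 1.
Proof. case: b => [[|[|k]] hk]; [left|right|]; try exact: val_inj. by []. Qed.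

Lemma F2_toD a b : F2_to F (a + b) = F2_to F a + F2_to F b.
Proof.
by case: (F2_01 a) => ->; case: (F2_01 b) => ->; rewrite /F2_to /= ?add0r ?addr0 ?t0.
Qed.

Lemma F2_toM a b : F2_to F (a * b) = F2_to F a * F2_to F b.
Proof.
by case: (F2_01 a) => ->; case: (F2_01 b) => ->; rewrite /F2_to /= ?mul0r ?mulr0 ?mulr1.
Qed.

Lemma F2_to0 : F2_to F 0 = 0. Proof. by []. Qed.

Lemma F2_to_eq0 b : (F2_to F b == 0) = (b == 0).
Proof. by case: (F2_01 b) => ->; rewrite /F2_to /= ?eqxx ?oner_eq0. Qed.
End F2.

Lemma tr0 (F : fieldType) T : trace2 T (0 : F) = 0.
Proof. by rewrite /trace2 big1 // => k _; rewrite expr0n expn_eq0. Qed.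

Lemma e_lt (nu Mt r : nat) : (0 < Mt)%N -> (r < nu.+1 * Mt)%N ->
  (r %/ Mt + nu.+1 * (r %% Mt) < nu.+1 * Mt)%N.
Proof.
move=> hM hr.
have h1 : (r %/ Mt < nu.+1)%N by rewrite ltn_divLR.
have h2 : (r %% Mt < Mt)%N by rewrite ltn_mod.
nia.
Qed.

Lemma e_inj (nu Mt r r' : nat) : (0 < Mt)%N -> (r < nu.+1 * Mt)%N -> (r' < nu.+1 * Mt)%N ->
  (r %/ Mt + nu.+1 * (r %% Mt) = r' %/ Mt + nu.+1 * (r' %% Mt))%N -> r = r'.
Proof.
move=> hM hr hr' h.
have h1 : (r %/ Mt < nu.+1)%N by rewrite ltn_divLR.
have h1' : (r' %/ Mt < nu.+1)%N by rewrite ltn_divLR.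
have ha := congr1 (modn^~ nu.+1) h; rewrite /= !(addnC (_ %/ Mt)%N) !(mulnC nu.+1) !modnMDl !modn_small // in ha.
move: h; rewrite ha => /addnI /eqP; rewrite eqn_mul2l /= => /eqP hb.
by rewrite (divn_eq r Mt) (divn_eq r' Mt) ha hb.
Qed.

Lemma trF2 (F : fieldType) T b (y : F) : trace2 T (F2_to F b * y) = F2_to F b * trace2 T y.
Proof.
by case: (F2_01 b) => ->; rewrite /F2_to /= ?mul0r ?tr0 ?mul1r.
Qed.

Lemma part2 (F : finFieldType) (T nu Mt : nat) (alpha : F) (theta : 'I_T -> F)
  (hMt : (1 <= Mt)%N) (hT : (Mt * nu.+1 <= T)%N)
  (hcard : #|F| = (2 ^ T)%N)
  (htheta : forall i j : 'I_T, trace2 T (theta i * alpha ^+ j) = (i == j)%:R)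
  (f0 : F) (f0nz : f0 != 0) (U : 'M['F_2]_(nu.+1 * Mt, T))
  (hU : @is_Uf F T nu Mt alpha (alpha ^+ nu.+1) f0 U) :
  (Mt * nu.+1 <= \rank U)%N.
Proof.
have t0 := @two0 _ _ hcard.
have hT' : (nu.+1 * Mt <= T)%N by rewrite mulnC.
suff kerv : forall v : 'rV['F_2]_(nu.+1*Mt), v *m U = 0 -> v = 0.
  have : row_free U.
    rewrite -kermx_eq0; apply/eqP/row_matrixP => i; rewrite row0; apply: kerv.
    by apply/sub_kermxP; exact: row_sub.
  by rewrite /row_free => /eqP ->; rewrite mulnC.
move=> v hv.
pose c := fun r => F2_to F (v 0 r).
pose eo := fun r : 'I_(nu.+1*Mt) => Ordinal (leq_trans (@e_lt nu Mt r hMt (ltn_ord r)) hT').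
have hsum : \sum_(r < nu.+1*Mt) c r * alpha ^+ (eo r) = 0.
  apply: (mulfI f0nz); rewrite mulr0 mulr_sumr.
  transitivity (\sum_r c r * uf_entry Mt alpha (alpha^+nu.+1) f0 r).
    by apply: eq_bigr => r _; rewrite /uf_entry /= exprD exprM; ring.
  under eq_bigr do rewrite hU mulr_sumr.
  rewrite exchange_big /= big1 // => j _.
  under eq_bigr do rewrite mulrA.
  rewrite -mulr_suml.
  under eq_bigr do rewrite /c -F2_toM.
  rewrite -(big_morph _ (@F2_toD _ t0) (F2_to0 F)).
  have := hv; move/matrixP => /(_ 0 j); rewrite !mxE => ->.
  by rewrite mul0r.
apply/rowP => r0; rewrite mxE; apply/eqP; rewrite -(F2_to_eq0 F).
have := congr1 (fun x => trace2 T (theta (eo r0) * x)) hsum.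
rewrite /= mulr0 tr0 mulr_sumr (big_morph _ (@trD _ _ hcard) (tr0 _ _)).
under eq_bigr => i _ do rewrite mulrCA trF2 (htheta (eo r0) (eo i)).
rewrite (bigD1 r0) //= eqxx mulr1 big1 ?addr0 => [->//|r nr].
case: eqP => [/(congr1 val) /= h|]; last by rewrite mulr0.
by move: nr; rewrite (val_inj (@e_inj nu Mt r0 r hMt (ltn_ord r0) (ltn_ord r) h)) eqxx.
Qed.

Lemma part1 (F : finFieldType) (T nu Mt : nat) (theta : 'I_T -> F) (xi : F)
  (hcard : #|F| = (2 ^ T)%N) (hnu : (nu <= T)%N) :
  (2 ^ T <= 2 ^ (nu * Mt) * #|@Sset F T nu Mt theta xi|)%N.
Proof.
pose g := fun (p : 'I_T * 'I_Mt.+1) (x : F) => trace2 T (theta p.1 * (x * xi ^+ p.2)).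
pose A := [set i : 'I_T | (T - nu <= i)%N].
pose B := [set j : 'I_Mt.+1 | (0 < j)%N].
have gD p x y : g p (x + y) = g p x + g p y.
  by rewrite /g mulrDl mulrDr (@trD _ _ hcard).
have g01 p x : g p x = 0 \/ g p x = 1 by exact: (@tr01 _ _ hcard).
have := @count_ker F _ g (@two0 _ _ hcard) gD g01 _ (finset.setX A B) erefl.
rewrite -hcard cardsX cardA // cardB.
have -> // : kerS F _ g (finset.setX A B) = @Sset F T nu Mt theta xi.
apply/setP => x; rewrite !inE; apply/forall_inP/forallP.
  move=> H i; apply/implyP => hi; apply/forallP => j; apply/implyP => hj.
  by apply: (H (i, j)); rewrite finset.in_setX !inE hi hj.
move=> H [i j]; rewrite finset.in_setX !inE => /andP[hi hj].
by move/(_ i): H; rewrite hi => /forallP/(_ j); rewrite hj.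
Qed.

Lemma realpart (R : realType) (T a s : nat) (ha : (a <= T)%N) (hT0 : (0 < T)%N)
  (hs : (2 ^ (T - a) <= s)%N) :
  1 - a%:R / T%:R <= ln (s%:R : R) / ln 2 / T%:R.
Proof.
have hk : (T - a)%:R * ln (2 : R) <= ln (s%:R : R).
  rewrite mulrC mulr_natr -lnXn ?ltr0n // -natrX ler_ln ?ler_nat //.
    by rewrite posrE ltr0n expn_gt0.
  by rewrite posrE ltr0n (leq_trans _ hs) // expn_gt0.
have ht : (0 : R) < T%:R by rewrite ltr0n.
have hl : (0 : R) < ln 2 by apply: ln_gt0; rewrite ltr1n.
have -> : 1 - a%:R / T%:R = (T - a)%:R / (T%:R : R).
  by rewrite natrB // mulrBl divff // gt_eqF.
by rewrite ler_pM2r ?invr_gt0 // ler_pdivlMr.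
Qed.

Theorem theorem7 (R : realType) (F : finFieldType) (T nu Mt : nat)
  (alpha : F) (theta : 'I_T -> F)
  (hMt : (1 <= Mt)%N) (hT : (Mt * nu.+1 <= T)%N)
  (hcard : #|F| = (2 ^ T)%N)
  (halpha : (2 ^ T - 1)%N.-primitive_root alpha)
  (htheta : forall i j : 'I_T,
      trace2 T (theta i * alpha ^+ j) = (i == j)%:R) :
  let xi := alpha ^+ nu.+1 in
  let S := @Sset F T nu Mt theta xi in
  ln (#|S|%:R : R) / ln 2 / T%:R >= 1 - (nu * Mt)%:R / T%:R
  /\ (forall f0 : F, f0 \in S -> f0 != 0 ->
       forall U : 'M['F_2]_(nu.+1 * Mt, T), @is_Uf F T nu Mt alpha xi f0 U ->
       (Mt * nu.+1 <= \rank U)%N).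
Proof.
move=> xi S.
have hnu : (nu <= T)%N by nia.
have hnM : (nu * Mt <= T)%N by nia.
have hT0 : (0 < T)%N by nia.
split.
  apply: (@realpart R T (nu * Mt) #|S| hnM hT0).
  have h := @part1 _ _ _ Mt theta xi hcard hnu.
  by rewrite -(leq_pmul2l (expn_gt0 2 (nu * Mt))) -expnD subnKC.
by move=> f0 _ f0nz U hU; exact: (@part2 _ _ _ _ _ _ hMt hT hcard htheta _ f0nz _ hU).
Qed.
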